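(* Let $Q$ be a nonrecursive connected query and let $a$ be the maximum radius of a rule of $\Pi_Q$. For every dataset $D'$, predicate $P$, tuple of objects $\vec o$, time point $\tau$, and finite set $\mathbf T$ of time points containing $\tau$ and every time point occurring in $\Pi_Q$: if $\Pi_Q\cup D'\models P(\vec o,\tau)$, then $\Pi_Q\cup D'[\min(\mathbf T)-a\cdot\mathrm{rank}(P)-1]\models P(\vec o,\tau)$.
   Context: Temporal Datalog. Constants are partitioned into objects and integer time points; variables into object variables and time variables. A time term is a time point, a time variable, or an expression $t+k$ with $t$ a time variable and $k\in\mathbb{Z}$. Each predicate is either extensional (EDB) or intensional (IDB) and has an arity $n\ge0$, each position being of object sort or time sort; a predicate is rigid if all its positions are of object sort, and temporal if its last position is of time sort and all others are of object sort. An atom $P(t_1,\dots,t_n)$ has terms of the required sorts. A rule is $\bigwedge_i\alpha_i\to\alpha$ with $\alpha$ and all $\alpha_i$ rigid or temporal atoms, $\alpha$ IDB whenever the body is nonempty, and every head variable occurring in the body. A program is a finite set of rules. A fact is a ground rigid or temporal atom without $+$ (identified with the rule $\top\to\alpha$); a dataset is a finite set of EDB facts. Rules are read as universally quantified first-order sentences with $+$ interpreted as integer addition; $\Pi\models\alpha$ denotes entailment. A query is $Q=\langle P_Q,\Pi_Q\rangle$ with $\Pi_Q$ a program and $P_Q$ an IDB predicate of $\Pi_Q$. For a dataset $D$ and time point $\tau$, $D[\tau]$ is the set of all rigid facts of $D$ together with the temporal facts of $D$ whose time argument is $>\tau$. Predicate $P$ depends on $P'$ in $\Pi$ if some rule of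 $\Pi$ has $P$ in the head and $P'$ in the body; $\Pi$ (or a query with program $\Pi$) is nonrecursive if the graph of this dependency relation is acyclic. $\mathrm{rank}(P)=\mathrm{rank}(P,\Pi_Q)$ is $0$ if $P$ does not occur in a rule head of $\Pi_Q$, and otherwise the maximum of $\mathrm{rank}(P')+1$ over predicates $P'$ on which $P$ depends. A rule is connected if it contains at most one time variable and, if a time variable occurs in the body, it also occurs in the head; a query is connected if all its rules are. For a time term $s$, $\Delta(s)=k$ if $s=t+k$ with $t$ a variable, and $\Delta(s)=0$ otherwise. The radius of a connected rule $r$ mentioning a time variable is the maximum of $|\Delta(s)-\Delta(s')|$ where $s$ is the time argument of the head and $s'$ the time argument of a body atom of $r$. *)

(* Defs.v *)
From Stdlib Require Import ZArith List Bool Relations.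
Import ListNotations.
Open Scope Z_scope.

(* A predicate: a name, the number of its object positions, whether it is
   temporal (an extra last position of time sort) or rigid (no time
   position), and whether it is IDB (true) or EDB (false).  Only rigid and
   temporal predicates can occur in atoms of rules/facts, so only these are
   modelled. *)
Record Pred := mkPred { pname : nat; parity : nat; ptemporal : bool; pidb : bool }.

Definition Pred_eq_dec (p q : Pred) : {p = q} + {p <> q}.
Proof. decide equality; try apply Bool.bool_dec; apply Nat.eq_dec. Defined.

Inductive OTerm := OConst (o : nat) | OVar (x : nat).
Inductive TTerm := TConst (z : Z) | TVar (t : nat) | TPlus (t : nat) (k : Z).

Record Atom := mkAtom { apred : Pred; aobjs : list OTerm; atime : option TTerm }.

Definition atom_wf (a : Atom) : Prop :=
  length (aobjs a) = parity (apred a) /\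
  (ptemporal (apred a) = true <-> atime a <> None).

Record Rule := mkRule { rbody : list Atom; rhead : Atom }.
Definition Program := list Rule.

Definition atom_ovars (a : Atom) : list nat :=
  flat_map (fun o => match o with OVar x => [x] | OConst _ => [] end) (aobjs a).
Definition atom_tvars (a : Atom) : list nat :=
  match atime a with Some (TVar t) | Some (TPlus t _) => [t] | _ => [] end.
Definition atom_tconsts (a : Atom) : list Z :=
  match atime a with Some (TConst z) => [z] | _ => [] end.

Definition rule_wf (r : Rule) : Prop :=
  Forall atom_wf (rhead r :: rbody r) /\
  (rbody r <> [] -> pidb (apred (rhead r)) = true) /\
  (forall x, In x (atom_ovars (rhead r)) ->
     exists b, In b (rbody r) /\ In x (atom_ovars b)) /\
  (forall t, In t (atom_tvars (rhead r)) ->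
     exists b, In b (rbody r) /\ In t (atom_tvars b)).

Definition program_wf (Pi : Program) : Prop := Forall rule_wf Pi.

Record GAtom := mkGAtom { gpred : Pred; gobjs : list nat; gtime : option Z }.

Definition gatom_wf (f : GAtom) : Prop :=
  length (gobjs f) = parity (gpred f) /\
  (ptemporal (gpred f) = true <-> gtime f <> None).

Definition dataset (D : list GAtom) : Prop :=
  forall f, In f D -> gatom_wf f /\ pidb (gpred f) = false.

Definition restrict (D : list GAtom) (tau : Z) : list GAtom :=
  filter (fun f => match gtime f with None => true | Some t => Z.ltb tau t end) D.

Definition Interp := GAtom -> Prop.

Definition eval_o (vo : nat -> nat) (s : OTerm) : nat :=
  match s with OConst o => o | OVar x => vo x end.
Definition eval_t (vt : nat -> Z) (s : TTerm) : Z :=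
  match s with TConst z => z | TVar t => vt t | TPlus t k => vt t + k end.

Definition ground (vo : nat -> nat) (vt : nat -> Z) (a : Atom) : GAtom :=
  mkGAtom (apred a) (map (eval_o vo) (aobjs a)) (option_map (eval_t vt) (atime a)).

Definition sat_rule (I : Interp) (r : Rule) : Prop :=
  forall vo vt, (forall b, In b (rbody r) -> I (ground vo vt b)) ->
                I (ground vo vt (rhead r)).

Definition model (Pi : Program) (I : Interp) : Prop :=
  forall r, In r Pi -> sat_rule I r.

Definition entails (Pi : Program) (D : list GAtom) (alpha : GAtom) : Prop :=
  forall I : Interp, model Pi I -> (forall f, In f D -> I f) -> I alpha.

Definition occurs_in (Pi : Program) (P : Pred) : Prop :=
  exists r a, In r Pi /\ In a (rhead r :: rbody r) /\ apred a = P.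

Record Query := mkQuery { qpred : Pred; qprog : Program }.

Definition query_wf (Q : Query) : Prop :=
  program_wf (qprog Q) /\ pidb (qpred Q) = true /\ occurs_in (qprog Q) (qpred Q).

Definition depends (Pi : Program) (P P' : Pred) : Prop :=
  exists r, In r Pi /\ apred (rhead r) = P /\
    exists b, In b (rbody r) /\ apred b = P'.

Definition nonrecursive (Pi : Program) : Prop :=
  forall P, ~ clos_trans Pred (depends Pi) P P.

(* rank with fuel; for nonrecursive programs fuel = length Pi suffices *)
Fixpoint rank_fuel (Pi : Program) (n : nat) (P : Pred) : nat :=
  match n with
  | O => O
  | S n' =>
      fold_right Nat.max O
        (flat_map (fun r => if Pred_eq_dec (apred (rhead r)) P
                            then map (fun b => S (rank_fuel Pi n' (apred b))) (rbody r)
                            else []) Pi)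
  end.

Definition rank (Pi : Program) (P : Pred) : nat := rank_fuel Pi (length Pi) P.

Definition rule_tvars (r : Rule) : list nat := flat_map atom_tvars (rhead r :: rbody r).

Definition connected_rule (r : Rule) : Prop :=
  (forall t1 t2, In t1 (rule_tvars r) -> In t2 (rule_tvars r) -> t1 = t2) /\
  (forall t, In t (flat_map atom_tvars (rbody r)) -> In t (atom_tvars (rhead r))).

Definition connected_query (Q : Query) : Prop :=
  forall r, In r (qprog Q) -> connected_rule r.

Definition delta (s : TTerm) : Z :=
  match s with TPlus _ k => k | _ => 0 end.

Definition radius (r : Rule) : Z :=
  match atime (rhead r) with
  | Some s => fold_right Z.max 0
      (map (fun b => match atime b with
                     | Some s' => Z.abs (delta s - delta s')
                     | None => 0 end) (rbody r))
  | None => 0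
  end.

Definition mentions_tvar (r : Rule) : bool :=
  match rule_tvars r with [] => false | _ => true end.

Definition max_radius (Pi : Program) : Z :=
  fold_right Z.max 0 (map radius (filter mentions_tvar Pi)).

Definition prog_tconsts (Pi : Program) : list Z :=
  flat_map (fun r => flat_map atom_tconsts (rhead r :: rbody r)) Pi.

(* Main.v *)
Require Import Defs.
From Stdlib Require Import ZArith List Lia Relations Classical.
Import ListNotations.
Open Scope Z_scope.

Lemma fold_max_ge (l : list nat) x : In x l -> (x <= fold_right Nat.max O l)%nat.
Proof. induction l; simpl; intros H; [contradiction|]. destruct H as [H|H]; [subst; lia | specialize (IHl H); lia]. Qed.

Lemma foldZ_ge (l : list Z) x : In x l -> x <= fold_right Z.max 0 l.
Proof. induction l; simpl; intros H; [contradiction|]. destruct H as [H|H]; [subst; lia | specialize (IHl H); lia]. Qed.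

Lemma foldZ_nonneg (l : list Z) : 0 <= fold_right Z.max 0 l.
Proof. induction l; simpl; lia. Qed.

Fixpoint dchain (Pi : Program) (l : list Pred) (Z : Pred) : Prop :=
  match l with
  | [] => True
  | P :: l' => depends Pi P (hd Z l') /\ dchain Pi l' Z
  end.

Lemma step_chain Pi n P :
  rank_fuel Pi (S n) P <> rank_fuel Pi n P ->
  exists l Z, length l = n /\ dchain Pi (P :: l) Z.
Proof.
  revert P; induction n; intros P H.
  - simpl in H. destruct (fold_right Nat.max O _) eqn:E; [congruence|].
    assert (exists x, In x (flat_map (fun r => if Pred_eq_dec (apred (rhead r)) P
          then map (fun b => S (rank_fuel Pi 0 (apred b))) (rbody r) else []) Pi)) as [x Hx].
    { destruct (flat_map _ _) eqn:E2; [simpl in E; discriminate|]. eexists; left; reflexivity. }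
    apply in_flat_map in Hx as [r [Hr Hx]].
    destruct (Pred_eq_dec (apred (rhead r)) P); [|contradiction].
    apply in_map_iff in Hx as [b [_ Hb]].
    exists [], (apred b); simpl; split; auto. split; auto. exists r; eauto.
  - destruct (classic (exists Q, depends Pi P Q /\ rank_fuel Pi (S n) Q <> rank_fuel Pi n Q))
      as [[Q [HQ HQ2]] | Hno].
    + destruct (IHn Q HQ2) as [l [Z [Hl Hc]]].
      exists (Q :: l), Z. simpl. split; [lia|]. split; auto.
    + exfalso; apply H. change (rank_fuel Pi (S (S n)) P) with
        (fold_right Nat.max O (flat_map (fun r => if Pred_eq_dec (apred (rhead r)) P
          then map (fun b => S (rank_fuel Pi (S n) (apred b))) (rbody r) else []) Pi)).
      change (rank_fuel Pi (S n) P) with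
        (fold_right Nat.max O (flat_map (fun r => if Pred_eq_dec (apred (rhead r)) P
          then map (fun b => S (rank_fuel Pi n (apred b))) (rbody r) else []) Pi)).
      f_equal. rewrite !flat_map_concat_map. f_equal. apply map_ext_in.
      intros r Hr. destruct (Pred_eq_dec (apred (rhead r)) P); auto.
      apply map_ext_in. intros b Hb. f_equal.
      destruct (Nat.eq_dec (rank_fuel Pi (S n) (apred b)) (rank_fuel Pi n (apred b))); auto.
      exfalso; apply Hno. exists (apred b); split; auto. exists r; eauto.
Qed.

Lemma dchain_tc Pi l : forall P Z Q, dchain Pi (P :: l) Z -> In Q l ->
  clos_trans Pred (depends Pi) P Q.
Proof.
  induction l; intros P Z Q H HQ; [contradiction|].
  destruct H as [H1 H2]. simpl in H1. destruct HQ as [<-|HQ].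
  - now apply t_step.
  - eapply t_trans; [apply t_step; eauto| eapply IHl; eauto].
Qed.

Lemma dchain_nodup Pi l Z : nonrecursive Pi -> dchain Pi l Z -> NoDup l.
Proof.
  intros Hnr; induction l; intros H; constructor.
  - intros Hin. apply (Hnr a). eapply dchain_tc; eauto.
  - apply IHl. apply H.
Qed.

Lemma dchain_heads Pi l Z : dchain Pi l Z ->
  incl l (map (fun r => apred (rhead r)) Pi).
Proof.
  induction l; intros H x Hx; [contradiction|].
  destruct H as [[r [Hr [Hh _]]] H2]. destruct Hx as [<-|Hx].
  - apply in_map_iff; eauto.
  - apply IHl; auto.
Qed.

Lemma rank_stable Pi P : nonrecursive Pi ->
  rank_fuel Pi (S (length Pi)) P = rank_fuel Pi (length Pi) P.
Proof.
  intros Hnr. destruct (Nat.eq_dec (rank_fuel Pi (S (length Pi)) P) (rank_fuel Pi (length Pi) P)); auto.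
  exfalso. destruct (step_chain _ _ _ n) as [l [Z [Hl Hc]]].
  pose proof (NoDup_incl_length (dchain_nodup _ _ _ Hnr Hc) (dchain_heads _ _ _ Hc)).
  rewrite length_map in H. simpl in H. lia.
Qed.

Lemma rank_dep Pi r b : nonrecursive Pi -> In r Pi -> In b (rbody r) ->
  (S (rank Pi (apred b)) <= rank Pi (apred (rhead r)))%nat.
Proof.
  intros Hnr Hr Hb. unfold rank. rewrite <- (rank_stable _ (apred (rhead r)) Hnr). cbn [rank_fuel].
  apply fold_max_ge. apply in_flat_map. exists r; split; auto.
  destruct (Pred_eq_dec (apred (rhead r)) (apred (rhead r))); [|congruence].
  apply in_map_iff; eauto.
Qed.

Theorem mainTheorem10 (Q : Query) (D' : list GAtom) (P : Pred) (os : list nat)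
  (tau : Z) (T : list Z) (tmin : Z) :
  query_wf Q -> nonrecursive (qprog Q) -> connected_query Q -> dataset D' ->
  ptemporal P = true -> length os = parity P ->
  In tau T -> (forall z, In z (prog_tconsts (qprog Q)) -> In z T) ->
  In tmin T -> (forall z, In z T -> tmin <= z) ->
  entails (qprog Q) D' (mkGAtom P os (Some tau)) ->
  entails (qprog Q)
    (restrict D' (tmin - max_radius (qprog Q) * Z.of_nat (rank (qprog Q) P) - 1))
    (mkGAtom P os (Some tau)).
Proof.
  intros _ Hnr Hcon _ _ _ Htau HT _ Hmin Hent.
  set (Pi := qprog Q) in *.
  set (a := max_radius Pi).
  assert (Ha : 0 <= a) by apply foldZ_nonneg.
  set (rho := fun R => Z.of_nat (rank Pi R)).
  set (I := fun g : GAtom => forall L, L <= tmin - a * rho (gpred g) ->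
        (forall t, gtime g = Some t -> L <= t - a * rho (gpred g)) ->
        entails Pi (restrict D' (L - 1)) g).
  assert (HI : I (mkGAtom P os (Some tau))).
  { apply Hent.
    - intros r Hr vo vt Hb L HL1 HL2 J HJ HD.
      apply (HJ r Hr vo vt). intros b Hbin.
      pose proof (rank_dep _ _ _ Hnr Hr Hbin) as Hrk.
      assert (Hrho : rho (apred b) + 1 <= rho (apred (rhead r))) by (unfold rho; lia).
      assert (Hm : a * rho (apred b) + a <= a * rho (apred (rhead r))) by nia.
      apply (Hb b Hbin L); simpl in *; auto.
      + lia.
      + intros t Ht. destruct (atime b) as [bs|] eqn:Eb; [|discriminate].
        simpl in Ht. injection Ht as <-.
        destruct bs as [c|x|x k].
        * simpl. assert (tmin <= c).
          { apply Hmin, HT. unfold prog_tconsts. apply in_flat_map. exists r; split; auto.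
            apply in_flat_map. exists b; split; [right; auto|]. unfold atom_tconsts; rewrite Eb; left; auto. }
          lia.
        * all: idtac.
          assert (Hx : In x (atom_tvars (rhead r))).
          { apply (proj2 (Hcon r Hr)). apply in_flat_map. exists b; split; auto.
            unfold atom_tvars; rewrite Eb; left; auto. }
          unfold atom_tvars in Hx. destruct (atime (rhead r)) as [hs|] eqn:Eh; [|contradiction].
          assert (Hrad : Z.abs (delta hs - delta (TVar x)) <= a).
          { eapply Z.le_trans with (radius r).
            - unfold radius. rewrite Eh. apply foldZ_ge. apply in_map_iff. exists b. rewrite Eb. auto.
            - apply foldZ_ge. apply in_map_iff. exists r; split; auto. apply filter_In; split; auto.
              unfold mentions_tvar, rule_tvars. simpl. unfold atom_tvars at 1. rewrite Eh.
              destruct hs; simpl in Hx; try contradiction; reflexivity. }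
          destruct hs as [c|y|y k0]; simpl in Hx; try contradiction; destruct Hx as [<-|[]];
            specialize (HL2 _ eq_refl); simpl in *; lia.
        * assert (Hx : In x (atom_tvars (rhead r))).
          { apply (proj2 (Hcon r Hr)). apply in_flat_map. exists b; split; auto.
            unfold atom_tvars; rewrite Eb; left; auto. }
          unfold atom_tvars in Hx. destruct (atime (rhead r)) as [hs|] eqn:Eh; [|contradiction].
          assert (Hrad : Z.abs (delta hs - delta (TPlus x k)) <= a).
          { eapply Z.le_trans with (radius r).
            - unfold radius. rewrite Eh. apply foldZ_ge. apply in_map_iff. exists b. rewrite Eb. auto.
            - apply foldZ_ge. apply in_map_iff. exists r; split; auto. apply filter_In; split; auto.
              unfold mentions_tvar, rule_tvars. simpl. unfold atom_tvars at 1. rewrite Eh.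
              destruct hs; simpl in Hx; try contradiction; reflexivity. }
          destruct hs as [c|y|y k0]; simpl in Hx; try contradiction; destruct Hx as [<-|[]];
            specialize (HL2 _ eq_refl); simpl in *; lia.
    - intros f Hf L HL1 HL2 J HJ HD. apply HD. apply filter_In; split; auto.
      destruct (gtime f) as [t|] eqn:Et; auto.
      specialize (HL2 t eq_refl). assert (0 <= a * rho (gpred f)) by (unfold rho; nia).
      apply Z.ltb_lt. lia. }
  apply HI; [unfold rho, a, Pi; simpl; lia|]. intros t Ht; simpl in Ht; injection Ht as <-.
  specialize (Hmin _ Htau). assert (0 <= a * rho P) by (unfold rho; nia). unfold rho in *. simpl. lia.
Qed.
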